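(* Let $\sigma:\mathbb R^n\to\mathbb R^{n\times m}$ be of class $C^1$, $u:\mathbb R^n\to\mathbb R$ of class $C^2$ and $\bar x\in\mathbb R^n$. Consider $$h(a_1,a_2)=K(\bar x)\begin{pmatrix}a_1\\ a_2\end{pmatrix}\cdot \begin{pmatrix}a_1\\ a_2\end{pmatrix},\qquad a_1,a_2\in\mathbb R^m,\ |a_1|,|a_2|\leq 1.$$ Then the minimum of $h$ is nonpositive. If this minimum is negative, then it is attained at an eigenvector $v=(a_1,a_2)$ of $K(\bar x)$ associated with the minimal eigenvalue $\lambda$ of $K(\bar x)$, with $|a_1|=|a_2|=1$ and $h(v)=2\lambda$.
   Context: With $\sigma_i$ the columns of $\sigma$, $\nabla u\,\sigma(x)=(\nabla u(x)\cdot\sigma_1(x),\dots,\nabla u(x)\cdot\sigma_m(x))$ and $D(\nabla u\,\sigma)$ its $m\times n$ Jacobian, define $S(x)={}^t\sigma(x)\,{}^tD(\nabla u\,\sigma)(x)\in\mathbb R^{m\times m}$, $S^*=\frac12(S+{}^tS)$ and the symmetric matrix $K(x)=\begin{pmatrix}S^*(x)&{}^tS(x)\\ S(x)&S^*(x)\end{pmatrix}\in\mathbb R^{2m\times2m}$. *)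

(* Defs.v *)
From HB Require Import structures.
From mathcomp Require Import all_boot all_order all_algebra.
From mathcomp Require Import all_classical all_reals all_analysis.
Set Implicit Arguments. Unset Strict Implicit. Unset Printing Implicit Defensive.
Import Order.TTheory GRing.Theory Num.Theory.
Import numFieldNormedType.Exports.
Local Open Scope ring_scope.

Section Defs.
Variable R : realType.

Definition ebasis (n : nat) (j : 'I_n) : 'rV[R]_n := delta_mx 0 j.

Definition partial (n : nat) (W : normedModType R) (f : 'rV[R]_n -> W)
  (j : 'I_n) (x : 'rV[R]_n) : W := 'D_(ebasis j) f x.

Definition C1 (n : nat) (W : normedModType R) (f : 'rV[R]_n -> W) : Prop :=
  continuous f /\
  forall j : 'I_n, (forall x, derivable f x (ebasis j)) /\ continuous (partial f j).

Definition C2 (n : nat) (W : normedModType R) (f : 'rV[R]_n -> W) : Prop :=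
  C1 f /\ forall j : 'I_n, C1 (partial f j).

Definition grad (n : nat) (u : 'rV[R]_n -> R) (x : 'rV[R]_n) : 'rV[R]_n :=
  \row_j partial u j x.

Definition gradsig (n m : nat) (sigma : 'rV[R]_n -> 'M[R]_(n, m))
  (u : 'rV[R]_n -> R) (x : 'rV[R]_n) : 'rV[R]_m :=
  grad u x *m sigma x.

Definition jac_gradsig (n m : nat) (sigma : 'rV[R]_n -> 'M[R]_(n, m))
  (u : 'rV[R]_n -> R) (x : 'rV[R]_n) : 'M[R]_(m, n) :=
  \matrix_(i < m, j < n) partial (fun y => gradsig sigma u y 0 i) j x.

Definition Smat (n m : nat) (sigma : 'rV[R]_n -> 'M[R]_(n, m))
  (u : 'rV[R]_n -> R) (x : 'rV[R]_n) : 'M[R]_m :=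
  (sigma x)^T *m (jac_gradsig sigma u x)^T.

Definition Sstar (n m : nat) (sigma : 'rV[R]_n -> 'M[R]_(n, m))
  (u : 'rV[R]_n -> R) (x : 'rV[R]_n) : 'M[R]_m :=
  2^-1 *: (Smat sigma u x + (Smat sigma u x)^T).

Definition Kmat (n m : nat) (sigma : 'rV[R]_n -> 'M[R]_(n, m))
  (u : 'rV[R]_n -> R) (x : 'rV[R]_n) : 'M[R]_(m + m) :=
  block_mx (Sstar sigma u x) (Smat sigma u x)^T (Smat sigma u x) (Sstar sigma u x).

Definition enorm (k : nat) (a : 'cV[R]_k) : R :=
  Num.sqrt (\sum_i (a i 0) ^+ 2).

Definition qform (k : nat) (A : 'M[R]_k) (v : 'cV[R]_k) : R :=
  \sum_i (A *m v) i 0 * v i 0.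

Definition is_eigenvalue (k : nat) (A : 'M[R]_k) (lam : R) : Prop :=
  exists v : 'cV[R]_k, v != 0 /\ A *m v = lam *: v.

Definition is_min_eigenvalue (k : nat) (A : 'M[R]_k) (lam : R) : Prop :=
  is_eigenvalue A lam /\ forall mu, is_eigenvalue A mu -> lam <= mu.

End Defs.

(* Main.v *)
Require Import Defs.
From HB Require Import structures.
From mathcomp Require Import all_boot all_order all_algebra.
From mathcomp Require Import all_classical all_reals all_analysis.
From mathcomp Require Import ring lra.
Import Order.TTheory GRing.Theory Num.Theory.
Import numFieldNormedType.Exports.
Local Open Scope ring_scope.

Definition nn {R : realType} {k} (x : 'cV[R]_k) : R := (x^T *m x) 0 0.
Definition qf {R : realType} {k} (A : 'M[R]_k) (x : 'cV[R]_k) : R :=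
  (x^T *m A *m x) 0 0.

Lemma nnE (R : realType) k (x : 'cV[R]_k) : nn x = \sum_i x i 0 ^+ 2.
Proof. by rewrite /nn !mxE; apply: eq_bigr => i _; rewrite !mxE expr2. Qed.

Lemma nn_ge0 (R : realType) k (x : 'cV[R]_k) : 0 <= nn x.
Proof. by rewrite nnE; apply: sumr_ge0 => i _; apply: sqr_ge0. Qed.

Lemma nn_eq0 (R : realType) k (x : 'cV[R]_k) : nn x = 0 -> x = 0.
Proof.
rewrite nnE => /psumr_eq0P H.
apply/matrixP => i j; rewrite ord1 mxE.
by apply/eqP; rewrite -sqrf_eq0; apply/eqP/H => // l _; apply: sqr_ge0.
Qed.

Lemma qformE (R : realType) k (A : 'M[R]_k) x : qform A x = qf A x.
Proof.
rewrite /qform /qf -mulmxA mxE; apply: eq_bigr => i _.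
rewrite mulrC; congr (_ * _); rewrite !mxE //.
Qed.

Lemma qf_tr (R : realType) k (A : 'M[R]_k) (x y : 'cV[R]_k) : A^T = A ->
  (x^T *m A *m y) 0 0 = (y^T *m A *m x) 0 0.
Proof.
move=> HA; have -> : (x^T *m A *m y) 0 0 = ((x^T *m A *m y)^T) 0 0 by rewrite [RHS]mxE.
by rewrite !trmx_mul HA trmxK mulmxA.
Qed.

Lemma qfZ (R : realType) k (A : 'M[R]_k) x t : qf A (t *: x) = t ^+ 2 * qf A x.
Proof.
by rewrite /qf linearZ /= linearZ /= -!scalemxAl !mxE mulrA expr2.
Qed.

Lemma nnZ (R : realType) k (x : 'cV[R]_k) t : nn (t *: x) = t ^+ 2 * nn x.
Proof.
by rewrite /nn linearZ /= linearZ /= -!scalemxAl !mxE mulrA expr2.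
Qed.

Lemma nn_col (R : realType) k (a b : 'cV[R]_k) : nn (col_mx a b) = nn a + nn b.
Proof. by rewrite /nn tr_col_mx mul_row_col mxE. Qed.

Lemma enormE (R : realType) k (x : 'cV[R]_k) : enorm x = Num.sqrt (nn x).
Proof. by rewrite nnE. Qed.

Lemma psd_zero (R : realType) k (P : 'M[R]_k) (v : 'cV[R]_k) : P^T = P ->
  (forall w, 0 <= qf P w) -> qf P v = 0 -> P *m v = 0.
Proof.
move=> HP Hpos Hv; set e := P *m v.
have key t : qf P (v + t *: e) = 2 * t * nn e + t ^+ 2 * qf P e.
  have tD : (v + t *: e)^T = v^T + t *: e^T by apply/matrixP => i j; rewrite !mxE.
  rewrite /qf /nn tD !mulmxDl !mulmxDr -!scalemxAl -!scalemxAr.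
  have h1 : (v^T *m P *m e) 0 0 = (e^T *m e) 0 0.
    by rewrite qf_tr // -mulmxA.
  have h2 : (e^T *m P *m v) 0 0 = (e^T *m e) 0 0 by rewrite -mulmxA.
  have h0 : (v^T *m P *m v) 0 0 = 0 by [].
  move: h0 h1 h2.
  set a0 := v^T *m P *m v; set a1 := v^T *m P *m e; set a2 := e^T *m P *m v.
  set a3 := e^T *m P *m e; set a4 := e^T *m e.
  move=> h0 h1 h2.
  have eD (A B : 'cV[R]_1) : (A + B) 0 0 = A 0 0 + B 0 0 by rewrite mxE.
  have eZ (c : R) (A : 'cV[R]_1) : (c *: A) 0 0 = c * A 0 0 by rewrite mxE.
  rewrite !eD !eZ h0 h1 h2; ring.
have b0 : nn e = 0.
  set b := nn e; set a := qf P e.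
  have ha : 0 <= a by apply: Hpos.
  have hb : 0 <= b by apply: nn_ge0.
  have := Hpos (v + (- (b / (a + 1))) *: e); rewrite key.
  set u := b / (a + 1).
  have hu : b = u * (a + 1) by rewrite /u mulfVK // gt_eqF // ltr_wpDl.
  rewrite -/b -/a hu => H.
  have : u * u * (a + 2) <= 0 by nra.
  move=> H2; have : u = 0 by nra.
  by move=> ->; rewrite mul0r.
exact: nn_eq0.
Qed.

Lemma qf_cont (R : realType) k (A : 'M[R]_k) :
  continuous (fun w : 'rV[R]_k => qf A w^T).
Proof.
have -> : (fun w : 'rV[R]_k => qf A w^T) =
    fun w => \sum_j (\sum_i w 0 i * A i j) * w 0 j.
  apply: funext => w; rewrite /qf trmxK mxE; apply: eq_bigr => j _.
  by rewrite !mxE.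
apply: (@continuous_big _ _ _ _ _ add_continuous) => j _.
have Hi : continuous (fun w : 'rV[R]_k => \sum_i w 0 i * A i j).
  apply: (@continuous_big _ _ _ _ _ add_continuous) => i _.
  move=> w; apply: (@continuousM _ _ (fun x : 'rV[R]_k => x 0 i) (fun _ => A i j)).
    exact: coord_continuous.
  exact: cst_continuous.
move=> w; apply: (@continuousM _ _ (fun x : 'rV[R]_k => \sum_i x 0 i * A i j) (fun x => x 0 j)).
  exact: Hi.
exact: coord_continuous.
Qed.

Lemma entry_sq_le (R : realType) k (x : 'cV[R]_k) j : x j 0 ^+ 2 <= nn x.
Proof.
rewrite nnE (bigD1 j) //= lerDl; apply: sumr_ge0 => i _; exact: sqr_ge0.
Qed.

Lemma min_sphere (R : realType) k (A : 'M[R]_k) : (0 < k)%N ->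
  exists v : 'cV[R]_k, nn v = 1 /\ forall w, qf A v * nn w <= qf A w.
Proof.
move=> k0.
set S := [set w : 'rV[R]_k | nn w^T = 1]%classic.
have nnT_cont : continuous (fun w : 'rV[R]_k => nn w^T).
  have -> : (fun w : 'rV[R]_k => nn w^T) = fun w => qf 1%:M w^T.
    by apply: funext => w; rewrite /qf /nn mulmx1.
  exact: qf_cont.
have S0 : (S !=set0)%classic.
  exists (delta_mx 0 (Ordinal k0)); rewrite /S /= nnE (bigD1 (Ordinal k0)) //=.
  rewrite big1 => [|i ne]; first by rewrite !mxE !eqxx /= expr1n addr0.
  by rewrite !mxE (negbTE ne) andbF expr0n.
have Scomp : compact S.
  apply: bounded_closed_compact.
    exists 1; split => // M M1 x Sx.
    rewrite /= [leLHS]/Num.Def.normr /= mx_normrE.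
    apply: (big_ind (fun y => y <= M)) => //; first by rewrite ltW // (lt_trans _ M1).
      by move=> a b ha hb; rewrite ge_max ha hb.
    case=> i j _ /=; rewrite ord1.
    have := @entry_sq_le _ _ x^T j; rewrite Sx mxE => h.
    rewrite ler_norml; apply/andP; split; nra.
  have -> : S = ((fun w : 'rV[R]_k => nn w^T) @^-1` [set 1])%classic by [].

  apply: preimage_closed => [x _|]; first exact: nnT_cont.
  exact: closed_eq.
have [c Sc minc] := EVT_min_rV S0 Scomp (continuous_subspaceT (@qf_cont _ _ A)).
rewrite inE in Sc.
exists c^T; split => // w.
case: (nn w =P 0) => [/nn_eq0 ->|nz].
  by rewrite /qf /nn trmx0 !mul0mx !mxE mulr0.
have wpos : 0 < nn w by rewrite lt_def nn_ge0 andbT; apply/eqP.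
set s := Num.sqrt (nn w).
have spos : 0 < s by rewrite sqrtr_gt0.
have hs : nn w = s ^+ 2 by rewrite sqr_sqrtr // ltW.
have := minc (s^-1 *: w)^T; rewrite inE /S /= trmxK nnZ qfZ hs => /(_ _).
have e1 : s^-1 ^+ 2 * s ^+ 2 = 1 by rewrite -exprMn mulVf ?expr1n // gt_eqF.
move=> /(_ e1) H.
have e2 : s^-1 ^+ 2 * qf A w * s ^+ 2 = qf A w.
  by rewrite mulrAC e1 mul1r.
rewrite -e2 ler_pM2r ?exprn_gt0 //.
Qed.

Lemma dot_sym (R : realType) k (x y : 'cV[R]_k) : (x^T *m y) 0 0 = (y^T *m x) 0 0.
Proof.
have -> : (x^T *m y) 0 0 = ((x^T *m y)^T) 0 0 by rewrite [RHS]mxE.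
by rewrite trmx_mul trmxK.
Qed.

Lemma skew_zero (R : realType) k (N : 'M[R]_k) (x : 'cV[R]_k) : N^T = - N ->
  (x^T *m N *m x) 0 0 = 0.
Proof.
move=> HN.
have h : (x^T *m N *m x) 0 0 = - (x^T *m N *m x) 0 0.
  rewrite [LHS](_ : _ = ((x^T *m N *m x)^T) 0 0); last by rewrite [RHS]mxE.
  rewrite !trmx_mul trmxK HN mulmxA mulmxN mulNmx mxE //.
lra.
Qed.

Definition Ssg {R : realType} {m} (S : 'M[R]_m) : 'M[R]_m := 2^-1 *: (S + S^T).
Definition Kg {R : realType} {m} (S : 'M[R]_m) : 'M[R]_(m + m) :=
  block_mx (Ssg S) S^T S (Ssg S).

Lemma Kg_sym (R : realType) m (S : 'M[R]_m) : (Kg S)^T = Kg S.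
Proof.
have hs : (Ssg S)^T = Ssg S by apply/matrixP => i j; rewrite !mxE addrC.
by rewrite /Kg tr_block_mx trmxK hs.
Qed.

Lemma Kg_bal (R : realType) m (S : 'M[R]_m) (a1 a2 : 'cV[R]_m) lam :
  Kg S *m col_mx a1 a2 = lam *: col_mx a1 a2 -> lam != 0 -> nn a1 = nn a2.
Proof.
rewrite /Kg mul_block_col scale_col_mx => /eq_col_mx [h1 h2] lam0.
set N := 2^-1 *: (S^T - S).
have E1 : Ssg S - S = N.
  apply/matrixP => i j; rewrite !mxE; lra.
have E2 : S^T - Ssg S = N.
  apply/matrixP => i j; rewrite !mxE; lra.
have hN : N *m (a1 + a2) = lam *: (a1 - a2).
  rewrite mulmxDr -{1}E1 -E2 !mulmxBl scalerBr -h1 -h2 opprD addrACA //.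
have NT : N^T = - N by apply/matrixP => i j; rewrite !mxE; lra.
have := @skew_zero _ _ _ (a1 + a2) NT.
rewrite -mulmxA hN -scalemxAr mxE => /eqP; rewrite mulf_eq0 (negbTE lam0) /= => /eqP.
have tD : (a1 + a2)^T = a1^T + a2^T by apply/matrixP => i j; rewrite !mxE.
have eD (A B : 'cV[R]_1) : (A + B) 0 0 = A 0 0 + B 0 0 by rewrite mxE.
have eN (A : 'cV[R]_1) : (- A) 0 0 = - A 0 0 by rewrite mxE.
rewrite tD mulmxDl !mulmxBr !eD !eN.
rewrite (@dot_sym _ _ a2 a1) /nn; lra.
Qed.

Lemma e00D (R : realType) (A B : 'cV[R]_1) : (A + B) 0 0 = A 0 0 + B 0 0.
Proof. by rewrite mxE. Qed.
Lemma e00N (R : realType) (A : 'cV[R]_1) : (- A) 0 0 = - A 0 0.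
Proof. by rewrite mxE. Qed.
Lemma e00Z (R : realType) c (A : 'cV[R]_1) : (c *: A) 0 0 = c * A 0 0.
Proof. by rewrite mxE. Qed.

Lemma nn0 (R : realType) k : nn (0 : 'cV[R]_k) = 0.
Proof. by rewrite /nn trmx0 mul0mx mxE. Qed.

Lemma qf0 (R : realType) k (A : 'M[R]_k) : qf A 0 = 0.
Proof. by rewrite /qf trmx0 !mul0mx mxE. Qed.

Lemma enorm0 (R : realType) k : enorm (0 : 'cV[R]_k) = 0.
Proof. by rewrite enormE nn0 sqrtr0. Qed.

Lemma nn_le1 (R : realType) k (a : 'cV[R]_k) : enorm a <= 1 -> nn a <= 1.
Proof.
rewrite enormE => h.
have h0 : 0 <= Num.sqrt (nn a) by apply: sqrtr_ge0.
rewrite -(sqr_sqrtr (@nn_ge0 _ _ a)); nra.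
Qed.

Lemma qf_eig (R : realType) k (A : 'M[R]_k) (w : 'cV[R]_k) lam :
  A *m w = lam *: w -> qf A w = lam * nn w.
Proof. by move=> e; rewrite /qf -mulmxA e -scalemxAr mxE. Qed.

Theorem proposition4 (R : realType) (n m : nat)
  (sigma : 'rV[R]_n -> 'M[R]_(n, m)) (u : 'rV[R]_n -> R) (xbar : 'rV[R]_n) :
  C1 sigma -> C2 u ->
  let K := Kmat sigma u xbar in
  let h := fun a1 a2 : 'cV[R]_m => qform K (col_mx a1 a2) in
  exists c : R,
    (* c is the minimum of h over |a1| <= 1, |a2| <= 1 *)
    ((exists a1 a2 : 'cV[R]_m, enorm a1 <= 1 /\ enorm a2 <= 1 /\ h a1 a2 = c) /\
     (forall a1 a2 : 'cV[R]_m, enorm a1 <= 1 -> enorm a2 <= 1 -> c <= h a1 a2)) /\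
    c <= 0 /\
    (c < 0 ->
     exists (a1 a2 : 'cV[R]_m) (lam : R),
       is_min_eigenvalue K lam /\
       K *m col_mx a1 a2 = lam *: col_mx a1 a2 /\
       enorm a1 = 1 /\ enorm a2 = 1 /\
       h a1 a2 = c /\ h a1 a2 = 2 * lam).
Proof.
move=> _ _ K h.
have KE : K = Kg (Smat sigma u xbar) by [].
have hE a1 a2 : h a1 a2 = qf K (col_mx a1 a2) by rewrite /h qformE.
have Ksym : K^T = K by rewrite KE Kg_sym.
have h00 : h 0 0 = 0 by rewrite hE col_mx0 qf0.
have [m0|mpos] := posnP m.
  have hz a1 a2 : h a1 a2 = 0.
    rewrite /h /qform big1 // => i _.
    by exfalso; move: (ltn_ord i); move: (nat_of_ord i) => j; rewrite m0.
  exists 0; split; [split|split] => //.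
  - by exists 0, 0; rewrite enorm0 h00.
  - by move=> a1 a2 _ _; rewrite hz.
  - by rewrite ltxx.
have [v [nv hv]] := @min_sphere _ _ K (ltn_addr m mpos).
set mu := qf K v in hv.
have ev : K *m v = mu *: v.
  have P0 : (K - mu%:M) *m v = 0.
    apply: psd_zero.
    - by rewrite linearB /= Ksym tr_scalar_mx.
    - move=> w; rewrite /qf mulmxBr mulmxBl mul_mx_scalar -scalemxAl e00D e00N e00Z.
      rewrite subr_ge0; exact: hv.
    - rewrite /qf mulmxBr mulmxBl mul_mx_scalar -scalemxAl e00D e00N e00Z.
      by rewrite -/(qf K v) -/(nn v) nv mulr1 subrr.
  by apply/eqP; rewrite -subr_eq0 -mul_scalar_mx -mulmxBl P0.
have vnz : v != 0 by apply/eqP => v0; move: nv; rewrite v0 nn0 => /eqP; rewrite eq_sym oner_eq0.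
have minev : is_min_eigenvalue K mu.
  split; first by exists v.
  move=> mu' [w [wnz ew]].
  have wpos : 0 < nn w.
    rewrite lt_def nn_ge0 andbT; apply/eqP => /nn_eq0 w0; by rewrite w0 eqxx in wnz.
  have := hv w; rewrite (@qf_eig _ _ _ _ _ ew) ler_pM2r //.
have lb a1 a2 : enorm a1 <= 1 -> enorm a2 <= 1 ->
    mu * (nn a1 + nn a2) <= h a1 a2 /\ 0 <= nn a1 + nn a2 <= 2.
  move=> /nn_le1 e1 /nn_le1 e2; rewrite hE -nn_col; split; first exact: hv.
  rewrite nn_col; have := @nn_ge0 _ _ a1; have := @nn_ge0 _ _ a2.
  move=> p1 p2; apply/andP; split; lra.
have [mneg|mge] := ltP mu 0; last first.
  exists 0; split; [split|split] => //.
  - by exists 0, 0; rewrite enorm0 h00 ler01.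
  - move=> a1 a2 e1 e2; have [H1 /andP[H2 H3]] := lb a1 a2 e1 e2; nra.
  - by rewrite ltxx.
set b1 := usubmx v; set b2 := dsubmx v.
have vE : v = col_mx b1 b2 by rewrite vsubmxK.
have bal : nn b1 = nn b2.
  apply: (@Kg_bal _ _ (Smat sigma u xbar) _ _ mu); last by rewrite lt_eqF.
  by rewrite -KE -vE.
have hb : nn b1 + nn b2 = 1 by rewrite -nn_col -vE.
set s := Num.sqrt (2 : R).
have s2 : s ^+ 2 = 2 by rewrite sqr_sqrtr // ler0n.
have na1 : nn (s *: b1) = 1 by rewrite nnZ s2; lra.
have na2 : nn (s *: b2) = 1 by rewrite nnZ s2; lra.
have cE : col_mx (s *: b1) (s *: b2) = s *: v by rewrite vE scale_col_mx.
have hval : h (s *: b1) (s *: b2) = 2 * mu by rewrite hE cE qfZ s2.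
exists (2 * mu); split; [split|split].
- by exists (s *: b1), (s *: b2); rewrite !enormE na1 na2 sqrtr1 lexx.
- move=> a1 a2 e1 e2; have [H1 /andP[H2 H3]] := lb a1 a2 e1 e2; nra.
- nra.
- move=> _; exists (s *: b1), (s *: b2), mu; split => //; split.
    by rewrite cE -scalemxAr ev !scalerA mulrC.
  by rewrite !enormE na1 na2 sqrtr1.
Qed.
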